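(* Let $p_n(\mathbf y)$ be a linear sequence of symmetric functions of binomial type, and let $\theta,\phi$ be shift-invariant linear operators on $\Lambda$. Then for every $n\ge0$, $$\epsilon\,\theta\phi\, p_n(\mathbf y)=\sum_{k=0}^n\binom nk\big(\epsilon\,\theta\, p_k(\mathbf y)\big)\big(\epsilon\,\phi\, p_{n-k}(\mathbf y)\big).$$
   Context: $\Lambda$ is the algebra of complex symmetric functions in $\mathbf y=(y_1,y_2,\dots)$. A linear sequence of symmetric functions of binomial type is $$p_n(\mathbf y)=\sum_{\lambda\vdash n}\frac{n!}{\prod_i\lambda_i!}\Big(\prod_ia_{\lambda_i}\Big)m_\lambda(\mathbf y)$$ for complex numbers $a_0=1,a_1\ne0,a_2,\dots$, where $m_\lambda$ is the monomial symmetric function. A linear operator $\theta$ on $\Lambda$ is shift-invariant if $E^a\theta=\theta E^a$ for all $a\in\mathbb C$, where $E^ap(y_1,y_2,\dots)=p(a,y_1,y_2,\dots)$. $\epsilon p=p(0,0,\dots)$. *)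

(* Defs.v *)
From HB Require Import structures.
From mathcomp Require Import all_boot all_order all_algebra.
From mathcomp Require Import complex.
From mathcomp Require Import Rstruct.
Set Implicit Arguments. Unset Strict Implicit. Unset Printing Implicit Defensive.
Import Order.TTheory GRing.Theory Num.Theory.
Local Open Scope ring_scope.

Definition CC : numClosedFieldType := (Rdefinitions.R)[i].

(* A symmetric function is represented by its evaluations at finitely many
   variables (y_1, ..., y_N, 0, 0, ...), given as a finite list y. *)
Definition symfun := seq CC -> CC.

Definition is_partition (n : nat) (l : seq nat) : bool :=
  [&& sorted geq l, all (fun i => 0 < i)%N l & sumn l == n].

Definition partitions (n : nat) : seq (seq nat) :=
  undup [seq l <- flatten [seq map (fun f : {ffun 'I_k -> 'I_n.+1} =>
                                        [seq val (f i) | i <- enum 'I_k])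
                                     (enum {ffun 'I_k -> 'I_n.+1})
                           | k <- iota 0 n.+1]
        | is_partition n l].

(* Monomial symmetric function m_lambda, evaluated at (y_1,...,y_N,0,...):
   sum of y^alpha over the distinct exponent vectors alpha whose nonzero
   entries are a rearrangement of lambda. *)
Definition msym (l : seq nat) : symfun := fun y =>
  \sum_(al : {ffun 'I_(size y) -> 'I_(sumn l).+1}
        | sort geq [seq val (al i) | i <- enum 'I_(size y) & val (al i) != 0%N] == l)
    \prod_(i < size y) (nth 0 y i) ^+ val (al i).

Definition inLambda (f : symfun) : Prop :=
  exists (s : seq (seq nat)) (c : seq nat -> CC),
    all (fun l => is_partition (sumn l) l) s /\
    f = fun y => \sum_(l <- s) c l * msym l y.

Definition Eshift (a : CC) (p : symfun) : symfun := fun y => p (a :: y).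

Definition epsilon (p : symfun) : CC := p [::].

Definition linear_on_Lambda (th : symfun -> symfun) : Prop :=
  (forall f, inLambda f -> inLambda (th f)) /\
  (forall (c : CC) f g, inLambda f -> inLambda g ->
     th (fun y => c * f y + g y) = (fun y => c * th f y + th g y)).

Definition shift_invariant (th : symfun -> symfun) : Prop :=
  forall (a : CC) f, inLambda f -> th (Eshift a f) = Eshift a (th f).

Definition binom_seq (a : nat -> CC) (n : nat) : symfun := fun y =>
  \sum_(l <- partitions n)
     ((n`!)%:R / \prod_(i <- l) (i`!)%:R) * (\prod_(i <- l) a i) * msym l y.

(* Main.v *)
Require Import Defs.
From HB Require Import structures.
From mathcomp Require Import all_boot all_order all_algebra.
From mathcomp Require Import complex Rstruct ring.
From Stdlib Require Import FunctionalExtensionality.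
Import GRing.Theory Num.Theory.
Local Open Scope ring_scope.

Definition key N M (f : {ffun 'I_N -> 'I_M}) : seq nat :=
  sort geq [seq val (f i) | i <- enum 'I_N & val (f i) != 0%N].
Arguments key {N M}.

Lemma msymE (l : seq nat) m (y : seq CC) : sumn l = m ->
  msym l y = \sum_(f : {ffun 'I_(size y) -> 'I_m.+1} | key f == l)
               \prod_(i < size y) (nth 0 y i) ^+ val (f i).
Proof. by move=> <-. Qed.

Lemma key_prod N M (f : {ffun 'I_N -> 'I_M}) (F : nat -> CC) : F 0%N = 1 ->
  \prod_(j <- key f) F j = \prod_(i < N) F (val (f i)).
Proof.
move=> F0; rewrite /key.
have P : perm_eq (sort geq [seq val (f i) | i <- enum 'I_N & val (f i) != 0%N])
                 [seq val (f i) | i <- enum 'I_N & val (f i) != 0%N].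
  by rewrite perm_sort perm_refl.
rewrite (perm_big _ P) big_map big_filter big_mkcond big_enum /=.
by apply: eq_bigr => i _; case: eqP => // ->.
Qed.

Lemma geq_tot : total geq.
Proof. by move=> x y; rewrite /geq /= orbC leq_total. Qed.

Lemma key_part N k (f : {ffun 'I_N -> 'I_k.+1}) :
  is_partition k (key f) = (\sum_i val (f i) == k)%N.
Proof.
rewrite /is_partition /key (sort_sorted geq_tot) all_sort /=.
have -> : all (fun i => (0 < i)%N) [seq val (f i) | i <- enum 'I_N & val (f i) != 0%N].
  apply/allP => x; case/mapP => i; rewrite mem_filter lt0n => /andP [nz _] ->; exact: nz.
have P : perm_eq (sort geq [seq val (f i) | i <- enum 'I_N & val (f i) != 0%N])
                 [seq val (f i) | i <- enum 'I_N & val (f i) != 0%N].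
  by rewrite perm_sort perm_refl.
rewrite (perm_sumn P) sumnE big_map big_filter big_mkcond big_enum /=.
congr (_ == _); apply: eq_bigr => i _; by case: eqP => // ->.
Qed.

Lemma sum_count (T : eqType) (s : seq T) (x : T) (c : CC) :
  \sum_(l <- s | x == l) c = c *+ count_mem x s.
Proof.
elim: s => [|h s IH]; first by rewrite big_nil.
rewrite big_cons IH /= eq_sym; case: eqP => _ //=.
by rewrite mulrS.
Qed.

Lemma prod_scaleX (I : Type) (r : seq I) (c : I -> CC) (e : I -> nat) :
  \prod_(i <- r) (c i *: 'X^(e i)) = (\prod_(i <- r) c i) *: 'X^(\sum_(i <- r) e i).
Proof.
elim: r => [|h r IH]; first by rewrite !big_nil scale1r expr0.
by rewrite !big_cons IH -scalerAl -scalerAr scalerA exprD.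
Qed.

Lemma size_le_sumn l : all (fun i => 0 < i)%N l -> (size l <= sumn l)%N.
Proof.
elim: l => //= h l IH /andP [h0 /IH H]; by rewrite -add1n leq_add.
Qed.

Lemma nth_le_sumn l i : (nth 0%N l i <= sumn l)%N.
Proof.
elim: l i => [|h l IH] [|i] //=; first exact: leq_addr.
exact: leq_trans (IH i) (leq_addl _ _).
Qed.

Lemma mem_partitions n l : (l \in partitions n) = is_partition n l.
Proof.
rewrite /partitions mem_undup mem_filter.
apply/andP/idP => [[]//| H]; split => //.
move: (H) => /and3P [_ pos /eqP sl].
apply/flatten_mapP; exists (size l).
  by rewrite mem_iota leq0n /= add0n ltnS -sl size_le_sumn.
apply/mapP; exists [ffun i : 'I_(size l) => (inord (nth 0%N l i) : 'I_n.+1)].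
  by rewrite mem_enum.
rewrite -[LHS](mkseq_nth 0%N) /mkseq -val_enum_ord -map_comp.
by apply: eq_map => i /=; rewrite ffunE inordK // ltnS -sl nth_le_sumn.
Qed.

Lemma partitions_uniq n : uniq (partitions n).
Proof. by rewrite /partitions undup_uniq. Qed.

Definition Apoly (a : nat -> CC) M (b : CC) : {poly CC} :=
  \poly_(j < M.+1) (a j / (j`!)%:R * b ^+ j).
Definition Gp (a : nat -> CC) M (y : seq CC) := \prod_(b <- y) Apoly a M b.

Lemma coef_Gp_sum a k y : (Gp a k y)`_k =
  \sum_(f : {ffun 'I_(size y) -> 'I_k.+1})
    (\prod_(i < size y) (a (f i) / ((f i)`!)%:R * (nth 0 y i) ^+ (f i)))
      * (k == \sum_i val (f i))%:R.
Proof.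
rewrite /Gp (big_nth 0) big_mkord /Apoly.
under eq_bigr do rewrite poly_def.
rewrite bigA_distr_bigA coef_sum; apply: eq_bigr => f _.
by rewrite prod_scaleX coefZ coefXn.
Qed.

Lemma pE (a : nat -> CC) k y : a 0%N = 1 ->
  binom_seq a k y = (k`!)%:R * (Gp a k y)`_k.
Proof.
move=> a0; rewrite coef_Gp_sum /binom_seq.
transitivity (\sum_(l <- partitions k)
   \sum_(f : {ffun 'I_(size y) -> 'I_k.+1} | key f == l)
      (k`!)%:R * \prod_(i < size y) (a (f i) / ((f i)`!)%:R * (nth 0 y i) ^+ (f i))).
  rewrite big_seq [RHS]big_seq; apply: eq_bigr => l.
  rewrite mem_partitions => /and3P [_ _ /eqP sl].
  rewrite (@msymE l k y sl) (@mulr_sumr CC); apply: eq_bigr => f /eqP kf.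
  rewrite -kf (@key_prod _ _ f (fun j => (j`!)%:R)); last by [].
  rewrite (@key_prod _ _ f a) //.
  rewrite !big_split /= prodfV; ring.
rewrite (@mulr_sumr CC) /=.
under eq_bigr do rewrite big_mkcond.
rewrite exchange_big /=; apply: eq_bigr => f _.
rewrite -big_mkcond sum_count count_uniq_mem ?partitions_uniq //.
by rewrite mem_partitions key_part eq_sym mulr_natr mulrnAr.
Qed.

Lemma coef_Apoly a M b i : (Apoly a M b)`_i =
  if (i < M.+1)%N then a i / (i`!)%:R * b ^+ i else 0.
Proof. by rewrite coef_poly. Qed.

Lemma Gp_trunc a M k y : (k <= M)%N -> forall i, (i <= k)%N ->
  (Gp a M y)`_i = (Gp a k y)`_i.
Proof.
move=> kM; rewrite /Gp; elim: y => [|b y IH] i ik; first by rewrite !big_nil.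
rewrite !big_cons !coefM; apply: eq_bigr => j _.
have ji : (j <= i)%N by rewrite -ltnS.
rewrite !coef_Apoly !ltnS (leq_trans ji ik) (leq_trans (leq_trans ji ik) kM) IH //.
exact: leq_trans (leq_subr _ _) ik.
Qed.

Lemma R4 (a : nat -> CC) n w z : a 0%N = 1 ->
  binom_seq a n (w ++ z) =
  \sum_(k < n.+1) ('C(n, k))%:R * binom_seq a (n - k) w * binom_seq a k z.
Proof.
move=> a0; rewrite pE // /Gp big_cat /= (mulrC (\prod_(b <- w) _)) coefM (@mulr_sumr CC) /=.
apply: eq_bigr => k _; have kn : (k <= n)%N by rewrite -ltnS.
rewrite !pE // -(@Gp_trunc a n (n - k) w (leq_subr k n) _ (leqnn _)) -(@Gp_trunc a n k z kn _ (leqnn k)) /Gp.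
rewrite -(bin_fact kn) !natrM; ring.
Qed.

Lemma inLambda_comb (a : nat -> CC) m (c : nat -> CC) :
  inLambda (fun z => \sum_(k < m) c k * binom_seq a k z).
Proof.
exists (flatten [seq partitions k | k <- iota 0 m]).
exists (fun l => c (sumn l) * (((sumn l)`!)%:R / \prod_(i <- l) (i`!)%:R
                 * (\prod_(i <- l) a i))).
split.
  apply/allP => l /flatten_mapP [k _]; rewrite mem_partitions => Hl.
  by move: (Hl); case/and3P => _ _ /eqP ->.
apply: functional_extensionality => z.
rewrite big_flatten /= big_map.
rewrite -val_enum_ord big_map big_enum /=.
apply: eq_bigr => k _; rewrite /binom_seq (@mulr_sumr CC) /=.
rewrite [LHS]big_seq [RHS]big_seq; apply: eq_bigr => l.
rewrite mem_partitions => /and3P [_ _ /eqP ->]; by rewrite !mulrA.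
Qed.

Lemma inLambda_p (a : nat -> CC) m : inLambda (binom_seq a m).
Proof.
exists (partitions m).
exists (fun l => (((sumn l)`!)%:R / \prod_(i <- l) (i`!)%:R
                 * (\prod_(i <- l) a i))).
split.
  apply/allP => l; rewrite mem_partitions => Hl.
  by move: (Hl); case/and3P => _ _ /eqP ->.
apply: functional_extensionality => z; rewrite /binom_seq.
rewrite [LHS]big_seq [RHS]big_seq; apply: eq_bigr => l.
by rewrite mem_partitions => /and3P [_ _ /eqP ->].
Qed.

Lemma th0 th : linear_on_Lambda th -> th (fun _ => 0) = (fun _ => 0).
Proof.
case=> _ Hl.
have H0 : inLambda (fun _ : seq CC => (0 : CC)).
  exists [::], (fun _ => 0); split => //.
  by apply: functional_extensionality => y; rewrite big_nil.
have := Hl 1 _ _ H0 H0.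
have -> : (fun y : seq CC => 1 * (0:CC) + 0) = (fun _ => 0).
  by apply: functional_extensionality => y; rewrite mulr0 addr0.
move=> E; apply: functional_extensionality => y.
have := congr1 (fun f => f y) E => /=; rewrite mul1r => E'.
by apply: (addrI (th (fun _ => 0) y)); rewrite -E' addr0.
Qed.

Lemma lin_comb th (a : nat -> CC) m (c : nat -> CC) : linear_on_Lambda th ->
  th (fun z => \sum_(k < m) c k * binom_seq a k z) =
  fun y => \sum_(k < m) c k * th (binom_seq a k) y.
Proof.
move=> Hth; elim: m => [|m IH].
  have -> : (fun z => \sum_(k < 0) c k * binom_seq a k z) = (fun _ => 0).
    by apply: functional_extensionality => z; rewrite big_ord0.
  rewrite th0 //; apply: functional_extensionality => z; by rewrite big_ord0.
have -> : (fun z => \sum_(k < m.+1) c k * binom_seq a k z) =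
   (fun z => c m * binom_seq a m z + \sum_(k < m) c k * binom_seq a k z).
  by apply: functional_extensionality => z; rewrite big_ord_recr addrC.
case: (Hth) => _ ->; last exact: inLambda_comb.
  rewrite IH; apply: functional_extensionality => z.
  by rewrite big_ord_recr /= addrC.
exact: inLambda_p.
Qed.

Theorem mainTheorem11 (a : nat -> CC) (th ph : symfun -> symfun) (n : nat) :
  a 0%N = 1 -> a 1%N != 0 ->
  linear_on_Lambda th -> linear_on_Lambda ph ->
  shift_invariant th -> shift_invariant ph ->
  epsilon (th (ph (binom_seq a n))) =
  \sum_(k < n.+1)
     ('C(n, k))%:R * epsilon (th (binom_seq a k)) * epsilon (ph (binom_seq a (n - k))).
Proof.
move=> a0 _ Lth Lph Sth Sph.
have TE : forall w, (fun z => binom_seq a n (w ++ z)) =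
   (fun z => \sum_(k < n.+1) (('C(n, k))%:R * binom_seq a (n - k) w) * binom_seq a k z).
  by move=> w; apply: functional_extensionality => z; rewrite R4.
have Tw : forall w, inLambda (fun z => binom_seq a n (w ++ z)).
  by move=> w; rewrite TE; exact: (inLambda_comb a n.+1 (fun k => ('C(n, k))%:R * binom_seq a (n - k) w)).
have C : forall y w, ph (fun z => binom_seq a n (w ++ z)) y =
                     epsilon (ph (fun z => binom_seq a n ((w ++ y) ++ z))).
  elim=> [|b y IH] w; first by rewrite cats0.
  have /(congr1 (fun f => f y)) /= E := Sph b _ (Tw w).
  rewrite /Eshift /= in E; rewrite -E.
  have -> : (fun y0 => binom_seq a n (w ++ b :: y0)) =
            (fun z => binom_seq a n (rcons w b ++ z)).
    by apply: functional_extensionality => z; rewrite cat_rcons.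
  by rewrite IH cat_rcons.
have Phi : ph (binom_seq a n) = fun y =>
   \sum_(k < n.+1) (('C(n, k))%:R * epsilon (ph (binom_seq a k))) * binom_seq a (n - k) y.
  apply: functional_extensionality => y.
  have := C y [::]; rewrite /= => ->.
  rewrite TE (lin_comb ph a n.+1 (fun k => ('C(n, k))%:R * binom_seq a (n - k) y) Lph) /epsilon.
  by apply: eq_bigr => k _; rewrite mulrAC.
have Phi2 : ph (binom_seq a n) = fun y =>
   \sum_(k < n.+1) (('C(n, n - k))%:R * epsilon (ph (binom_seq a (n - k)))) * binom_seq a k y.
  rewrite Phi; apply: functional_extensionality => y.
  rewrite (reindex_inj rev_ord_inj) /=; apply: eq_bigr => k _.
  by rewrite subSS subKn // -ltnS.
rewrite Phi2 (lin_comb th a n.+1 (fun k => ('C(n, n - k))%:R * epsilon (ph (binom_seq a (n - k)))) Lth) /epsilon.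
apply: eq_bigr => k _.
have kn : (k <= n)%N by rewrite -ltnS.
rewrite (bin_sub kn).
by rewrite mulrAC.
Qed.
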